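(* Let $({\mathcal B};{\mathcal V},{\mathcal H};{\mathcal P})$ be a slim (discrete) double groupoid satisfying the filling condition. On ${\mathcal V}\times_{b,l}{\mathcal H}=\{(v,h)\in{\mathcal V}\times{\mathcal H}: b(v)=l(h)\}$ define $(v_1,h_1)\sim_{\mathcal B}(v_2,h_2)$ iff $r(h_1)=r(h_2)$, $t(v_1)=t(v_2)$ and $v_1h_1h_2^{-1}v_2^{-1}\in J_\circledast({\mathcal B})$. Then $\sim_{\mathcal B}$ is an equivalence relation, and the map $$\phi:({\mathcal V}\times_{b,l}{\mathcal H})/\!\sim_{\mathcal B}\ \to{\mathcal D}({\mathcal B}),\qquad [v,h]\mapsto j(v)i(h)$$ is well defined and is a bijection (of quivers over ${\mathcal P}$, i.e. compatible with the maps to ${\mathcal P}$ given by $[v,h]\mapsto t(v)$, $[v,h]\mapsto r(h)$ and the source/target of ${\mathcal D}({\mathcal B})$).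
   Context: A (discrete) double groupoid $({\mathcal B};{\mathcal V},{\mathcal H};{\mathcal P})$: ${\mathcal V}$ and ${\mathcal H}$ are groupoids over ${\mathcal P}$; for ${\mathcal V}$ source/end are $t,b$, for ${\mathcal H}$ source/end are $l,r$. ${\mathcal B}$ is a set of ''boxes'' $A$ with sides $t(A),b(A)\in{\mathcal H}$, $l(A),r(A)\in{\mathcal V}$ (with $l(t(A))=t(l(A))$, $r(t(A))=t(r(A))$, $l(b(A))=b(l(A))$, $r(b(A))=b(r(A))$), carrying a horizontal groupoid structure over ${\mathcal V}$ (source $l$, target $r$; product $AB$ when $r(A)=l(B)$, with $t(AB)=t(A)t(B)$, $b(AB)=b(A)b(B)$) and a vertical groupoid structure over ${\mathcal H}$ (source $t$, target $b$; product when $b(A)=t(B)$, with left and right sides multiplied), the structure maps of each being morphisms for the other. It is slim if each box is determined by its four sides. It satisfies the filling condition if for every $x\in{\mathcal H}$, $f\in{\mathcal V}$ with $l(x)=t(f)$ there is a box $A$ with $t(A)=x$, $l(A)=f$; by symmetry of the axioms (using inverses) any ''corner'' of two compatible sides can be completed to a box. ${\mathcal V}\circledast{\mathcal H}$ is the free product groupoid over ${\mathcal P}$ of ${\mathcal V}$ and ${\mathcal H}$ (generated by ${\mathcal V}$ and ${\mathcal H}$ glued along identities, with words of composable arrows). For a box $A$ with top $x$, right $g$, bottom $y$, left $h$, set $[A]=xgy^{-1}h^{-1}\in{\mathcal V}\circledast{\mathcal H}$; $J_\circledast({\mathcal B})$ is the subgroupoid generated by all $[A]$, a normal group bundle. The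 diagonal groupoid is ${\mathcal D}({\mathcal B})=({\mathcal V}\circledast{\mathcal H})/J_\circledast({\mathcal B})$, and $i:{\mathcal H}\to{\mathcal D}({\mathcal B})$, $j:{\mathcal V}\to{\mathcal D}({\mathcal B})$ are the compositions of the natural inclusions with the projection. *)

(* Defs.v *)
From Stdlib Require Import List Relations RelationClasses.
Import ListNotations.
Set Implicit Arguments.

(** Composition is written in diagrammatic order: [comp x y] is "x then y",
    defined (meaningful) when [tgt x = src y]; it is a total function whose
    values outside composable pairs are irrelevant. *)
Record is_groupoid (O A : Type) (src tgt : A -> O) (id : O -> A)
    (comp : A -> A -> A) (inv : A -> A) : Prop := {
  gid_src : forall p, src (id p) = p;
  gid_tgt : forall p, tgt (id p) = p;
  gcomp_src : forall x y, tgt x = src y -> src (comp x y) = src x;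
  gcomp_tgt : forall x y, tgt x = src y -> tgt (comp x y) = tgt y;
  gcomp_assoc : forall x y z, tgt x = src y -> tgt y = src z ->
      comp (comp x y) z = comp x (comp y z);
  gid_left : forall x, comp (id (src x)) x = x;
  gid_right : forall x, comp x (id (tgt x)) = x;
  ginv_src : forall x, src (inv x) = tgt x;
  ginv_tgt : forall x, tgt (inv x) = src x;
  ginv_right : forall x, comp x (inv x) = id (src x);
  ginv_left : forall x, comp (inv x) x = id (tgt x)
}.

Record groupoid (P : Type) := Groupoid {
  garr :> Type;
  gsrc : garr -> P;
  gtgt : garr -> P;
  gid : P -> garr;
  gcomp : garr -> garr -> garr;
  ginv : garr -> garr;
  g_ax : is_groupoid gsrc gtgt gid gcomp ginv
}.
Arguments gsrc {P} g _.
Arguments gtgt {P} g _.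
Arguments gid {P} g _.
Arguments gcomp {P} g _ _.
Arguments ginv {P} g _.

(** * Double groupoids (B; V, H; P).
    For V: source = t ([gsrc V]), target = b ([gtgt V]).
    For H: source = l ([gsrc H]), target = r ([gtgt H]). *)
Record double_groupoid (P : Type) (V H : groupoid P) := DoubleGroupoid {
  box : Type;
  btop : box -> H;
  bbot : box -> H;
  bleft : box -> V;
  bright : box -> V;
  hid : V -> box;
  hcomp : box -> box -> box;
  hinv : box -> box;
  vid : H -> box;
  vcomp : box -> box -> box;
  vinv : box -> box;
  corner_tl : forall A, gsrc H (btop A) = gsrc V (bleft A);
  corner_tr : forall A, gtgt H (btop A) = gsrc V (bright A);
  corner_bl : forall A, gsrc H (bbot A) = gtgt V (bleft A);
  corner_br : forall A, gtgt H (bbot A) = gtgt V (bright A);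
  hgroupoid : is_groupoid bleft bright hid hcomp hinv;
  vgroupoid : is_groupoid btop bbot vid vcomp vinv;
  hcomp_top : forall A B, bright A = bleft B ->
      btop (hcomp A B) = gcomp H (btop A) (btop B);
  hcomp_bot : forall A B, bright A = bleft B ->
      bbot (hcomp A B) = gcomp H (bbot A) (bbot B);
  hid_top : forall v, btop (hid v) = gid H (gsrc V v);
  hid_bot : forall v, bbot (hid v) = gid H (gtgt V v);
  vcomp_left : forall A B, bbot A = btop B ->
      bleft (vcomp A B) = gcomp V (bleft A) (bleft B);
  vcomp_right : forall A B, bbot A = btop B ->
      bright (vcomp A B) = gcomp V (bright A) (bright B);
  vid_left : forall h, bleft (vid h) = gid V (gsrc H h);
  vid_right : forall h, bright (vid h) = gid V (gtgt H h);
  hid_vcomp : forall v w, gtgt V v = gsrc V w ->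
      hid (gcomp V v w) = vcomp (hid v) (hid w);
  vid_hcomp : forall h k, gtgt H h = gsrc H k ->
      vid (gcomp H h k) = hcomp (vid h) (vid k);
  hid_vid : forall p, hid (gid V p) = vid (gid H p);
  interchange : forall A B C D,
      bright A = bleft B -> bright C = bleft D ->
      bbot A = btop C -> bbot B = btop D ->
      vcomp (hcomp A B) (hcomp C D) = hcomp (vcomp A C) (vcomp B D)
}.
Arguments box {P V H} d.
Arguments btop {P V H} d _.
Arguments bbot {P V H} d _.
Arguments bleft {P V H} d _.
Arguments bright {P V H} d _.

Section FreeProduct.
Variables (P : Type) (V H : groupoid P) (D : double_groupoid V H).

Definition slim : Prop :=
  forall A B : box D, btop D A = btop D B -> bbot D A = bbot D B ->
    bleft D A = bleft D B -> bright D A = bright D B -> A = B.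

Definition filling : Prop :=
  forall (x : H) (f : V), gsrc H x = gsrc V f ->
    exists A : box D, btop D A = x /\ bleft D A = f.

(** * The free product groupoid V ⊛ H, modelled by words of letters. *)
Inductive letter : Type := LV (v : V) | LH (h : H).

Inductive wpath : P -> list letter -> P -> Prop :=
  | wpath_nil : forall p, wpath p [] p
  | wpath_V : forall (v : V) w q, wpath (gtgt V v) w q ->
      wpath (gsrc V v) (LV v :: w) q
  | wpath_H : forall (h : H) w q, wpath (gtgt H h) w q ->
      wpath (gsrc H h) (LH h :: w) q.

Inductive fstep : list letter -> list letter -> Prop :=
  | fstep_VV : forall l r (x y : V), gtgt V x = gsrc V y ->
      fstep (l ++ [LV x; LV y] ++ r) (l ++ [LV (gcomp V x y)] ++ r)
  | fstep_HH : forall l r (x y : H), gtgt H x = gsrc H y ->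
      fstep (l ++ [LH x; LH y] ++ r) (l ++ [LH (gcomp H x y)] ++ r)
  | fstep_idV : forall l r p, fstep (l ++ [LV (gid V p)] ++ r) (l ++ r)
  | fstep_idH : forall l r p, fstep (l ++ [LH (gid H p)] ++ r) (l ++ r).

(** Equality of arrows p -> q in V ⊛ H. *)
Definition free_eq (p q : P) : relation (list letter) :=
  clos_refl_sym_trans _
    (fun a c => wpath p a q /\ wpath p c q /\ fstep a c).

Definition letter_inv (a : letter) : letter :=
  match a with LV v => LV (ginv V v) | LH h => LH (ginv H h) end.

Definition winv (w : list letter) : list letter := rev (map letter_inv w).

(** [A] = x g y^{-1} h^{-1} (top x, right g, bottom y, left h). *)
Definition boxword (A : box D) : list letter :=
  [LH (btop D A); LV (bright D A); LH (ginv H (bbot D A)); LV (ginv V (bleft D A))].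

(** Membership (at the object p) in J_⊛(B), the subgroupoid of V ⊛ H
    generated by all [A]: the word is equal in V ⊛ H to a (possibly empty)
    composable product of generators [A] and their inverses. *)
Definition inJ (p : P) (w : list letter) : Prop :=
  wpath p w p /\
  exists ws : list (list letter),
    Forall (fun u => exists A : box D, u = boxword A \/ u = winv (boxword A)) ws /\
    free_eq p p w (concat ws).

(** Equality of arrows p -> q in D(B) = (V ⊛ H)/J_⊛(B). *)
Definition D_eq (p q : P) (w1 w2 : list letter) : Prop :=
  wpath p w1 q /\ wpath p w2 q /\ inJ p (w1 ++ winv w2).

Definition VH : Type := { vh : V * H | gtgt V (fst vh) = gsrc H (snd vh) }.

Definition simB (x y : VH) : Prop :=
  let '(v1, h1) := proj1_sig x in
  let '(v2, h2) := proj1_sig y in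
  gtgt H h1 = gtgt H h2 /\ gsrc V v1 = gsrc V v2 /\
  inJ (gsrc V v1) [LV v1; LH h1; LH (ginv H h2); LV (ginv V v2)].

(** phi [v,h] = j(v) i(h), represented by the word v h from t(v) to r(h). *)
Definition phi_word (x : VH) : list letter :=
  [LV (fst (proj1_sig x)); LH (snd (proj1_sig x))].
Definition phi_src (x : VH) : P := gsrc V (fst (proj1_sig x)).
Definition phi_tgt (x : VH) : P := gtgt H (snd (proj1_sig x)).

End FreeProduct.

(* Main.v *)
Require Import Defs.
From Stdlib Require Import List Relations RelationClasses.
Import ListNotations.
Set Implicit Arguments.
Arguments LV {P V H} v.
Arguments LH {P V H} h.

Section GLem.
Context (O A : Type) (src tgt : A -> O) (id : O -> A) (comp : A -> A -> A) (inv : A -> A)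
  (G : is_groupoid src tgt id comp inv).

Lemma inv_unique x y : tgt x = src y -> comp x y = id (src x) -> y = inv x.
Proof.
  intros e1 e2.
  rewrite <- (gid_left G y). rewrite <- e1, <- (ginv_left G x).
  rewrite (gcomp_assoc G); [| apply (ginv_tgt G) | exact e1].
  rewrite e2, <- (ginv_tgt G x). apply (gid_right G).
Qed.

Lemma inv_inv x : inv (inv x) = x.
Proof.
  symmetry. apply inv_unique. apply (ginv_tgt G).
  rewrite (ginv_left G), (ginv_src G). reflexivity.
Qed.

Lemma inv_id p : inv (id p) = id p.
Proof.
  symmetry. apply inv_unique. rewrite (gid_src G), (gid_tgt G). reflexivity.
  rewrite (gid_src G). pose proof (gid_left G (id p)) as e. rewrite (gid_src G) in e. exact e.
Qed.

Lemma comp_inv_l x y : tgt x = src y -> comp (inv x) (comp x y) = y.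
Proof.
  intros e. rewrite <- (gcomp_assoc G); [| apply (ginv_tgt G) | exact e].
  rewrite (ginv_left G), e. apply (gid_left G).
Qed.

Lemma inv_comp x y : tgt x = src y -> inv (comp x y) = comp (inv y) (inv x).
Proof.
  intros e.
  assert (e1 : tgt (inv y) = src (inv x)) by (rewrite (ginv_tgt G), (ginv_src G); auto).
  symmetry. apply inv_unique.
  - rewrite (gcomp_tgt G _ _ e), (gcomp_src G _ _ e1). rewrite (ginv_src G); auto.
  - assert (e2 : tgt y = src (comp (inv y) (inv x))) by (rewrite (gcomp_src G _ _ e1), (ginv_src G); auto).
    rewrite (gcomp_assoc G _ _ _ e e2).
    assert (e3 : tgt y = src (inv y)) by (rewrite (ginv_src G); auto).
    rewrite <- (gcomp_assoc G _ _ _ e3 e1).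
    rewrite (ginv_right G). rewrite <- e.
    assert (e4 : tgt x = src (inv x)) by (rewrite (ginv_src G); auto).
    rewrite e4, (gid_left G), (ginv_right G), (gcomp_src G _ _ e). auto.
Qed.

Lemma comp_inv_comp x y : tgt x = src y -> comp (inv (comp x y)) x = inv y.
Proof.
  intros e. rewrite inv_comp; auto.
  rewrite (gcomp_assoc G); [| rewrite (ginv_tgt G), (ginv_src G); auto | apply (ginv_tgt G)].
  rewrite (ginv_left G), e, <- (ginv_tgt G y). apply (gid_right G).
Qed.
End GLem.
Section Paths.
Context (P : Type) (V H : groupoid P).
Notation L := (letter V H).

Lemma wpV (v : V) (w : list L) p q : gsrc V v = p -> wpath (gtgt V v) w q -> wpath p (LV v :: w) q.
Proof. intros <- h. constructor; auto. Qed.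
Lemma wpH (h : H) (w : list L) p q : gsrc H h = p -> wpath (gtgt H h) w q -> wpath p (LH h :: w) q.
Proof. intros <- h'. constructor; auto. Qed.

Lemma wpV_inv (v : V) (w : list L) p q : wpath p (LV v :: w) q -> p = gsrc V v /\ wpath (gtgt V v) w q.
Proof. intros Hw. remember (LV v :: w) as l eqn:E. destruct Hw; inversion E; subst; auto. Qed.
Lemma wpH_inv (h : H) (w : list L) p q : wpath p (LH h :: w) q -> p = gsrc H h /\ wpath (gtgt H h) w q.
Proof. intros Hw. remember (LH h :: w) as l eqn:E. destruct Hw; inversion E; subst; auto. Qed.
Lemma wpnil_inv p q : wpath (V:=V) (H:=H) p [] q -> p = q.
Proof. intros Hw. remember (@nil L) as l eqn:E. destruct Hw; inversion E; subst; auto. Qed.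

Lemma wpath_app (a b : list L) p m q : wpath p a m -> wpath m b q -> wpath p (a ++ b) q.
Proof. intros Ha Hb. induction Ha; simpl; auto; constructor; auto. Qed.

Lemma wpath_app_inv (a b : list L) p q : wpath p (a ++ b) q -> exists m, wpath p a m /\ wpath m b q.
Proof.
  revert p. induction a as [|x a IH]; intros p Hw; simpl in *.
  - exists p. split; auto. constructor.
  - destruct x as [v|h].
    + apply wpV_inv in Hw as [-> Hw]. destruct (IH _ Hw) as [m [h1 h2]]. exists m; split; auto. constructor; auto.
    + apply wpH_inv in Hw as [-> Hw]. destruct (IH _ Hw) as [m [h1 h2]]. exists m; split; auto. constructor; auto.
Qed.

Lemma wpath_tgt_uniq (a : list L) p q q' : wpath p a q -> wpath p a q' -> q = q'.
Proof.
  intros h1. revert q'. induction h1; intros q' h2.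
  - apply wpnil_inv in h2; auto.
  - apply wpV_inv in h2 as [_ h2]. auto.
  - apply wpH_inv in h2 as [_ h2]. auto.
Qed.

Lemma wpath_src_uniq (a : list L) p q p' q' : a <> [] -> wpath p a q -> wpath p' a q' -> p = p'.
Proof.
  intros ne h1 h2. destruct a as [|[v|h] a]; [congruence| |].
  - apply wpV_inv in h1 as [-> _]. apply wpV_inv in h2 as [-> _]. auto.
  - apply wpH_inv in h1 as [-> _]. apply wpH_inv in h2 as [-> _]. auto.
Qed.

Lemma letter_inv_inv (a : L) : letter_inv (letter_inv a) = a.
Proof. destruct a; simpl; f_equal; apply (inv_inv (g_ax _)). Qed.

Lemma winv_app (a b : list L) : winv (a ++ b) = winv b ++ winv a.
Proof. unfold winv. rewrite map_app, rev_app_distr. auto. Qed.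
Lemma winv_cons (x : L) a : winv (x :: a) = winv a ++ [letter_inv x].
Proof. unfold winv. simpl. auto. Qed.
Lemma winv_winv (a : list L) : winv (winv a) = a.
Proof. unfold winv. rewrite map_rev, rev_involutive, map_map.
  induction a; simpl; auto. rewrite letter_inv_inv, IHa; auto. Qed.
Lemma winv_concat (ws : list (list L)) : winv (concat ws) = concat (rev (map (fun w => winv w) ws)).
Proof. induction ws; simpl; auto. rewrite winv_app, IHws, concat_app. simpl. rewrite app_nil_r. auto. Qed.

Lemma wpath_winv (a : list L) p q : wpath p a q -> wpath q (winv a) p.
Proof.
  intros h. induction h; rewrite ?winv_cons; simpl.
  - constructor.
  - apply wpath_app with (gtgt V v); auto. apply wpV. apply (ginv_src (g_ax V)).
    rewrite (ginv_tgt (g_ax V)). constructor.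
  - apply wpath_app with (gtgt H h); auto. apply wpH. apply (ginv_src (g_ax H)).
    rewrite (ginv_tgt (g_ax H)). constructor.
Qed.

Lemma fstep_winv (a c : list L) : fstep a c -> fstep (winv a) (winv c).
Proof.
  intros h. destruct h; rewrite !winv_app; simpl; unfold winv; simpl; rewrite <- ?app_assoc; simpl.
  - rewrite (inv_comp (g_ax V)); auto. apply (fstep_VV (H:=H)). rewrite (ginv_tgt (g_ax V)), (ginv_src (g_ax V)). auto.
  - rewrite (inv_comp (g_ax H)); auto. apply (fstep_HH (V:=V)). rewrite (ginv_tgt (g_ax H)), (ginv_src (g_ax H)). auto.
  - rewrite (inv_id (g_ax V)). apply fstep_idV.
  - rewrite (inv_id (g_ax H)). apply fstep_idH.
Qed.

Lemma free_eq_winv p q (a c : list L) : free_eq p q a c -> free_eq q p (winv a) (winv c).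
Proof.
  intros h. induction h as [x y [h1 [h2 h3]]| | |].
  - apply rst_step. split; [|split]; auto using wpath_winv, fstep_winv.
  - apply rst_refl.
  - apply rst_sym; auto.
  - eapply rst_trans; eauto.
Qed.

Lemma free_eq_paths p q (a c : list L) : free_eq p q a c -> a = c \/ (wpath p a q /\ wpath p c q).
Proof.
  intros h. induction h as [x y [h1 [h2 h3]]| | |x y z _ IH1 _ IH2].
  - right; auto.
  - left; auto.
  - destruct IHh as [->|[]]; auto.
  - destruct IH1 as [->|[]], IH2 as [->|[]]; auto.
Qed.

Lemma fstep_app (l a c r : list L) : fstep a c -> fstep (l ++ a ++ r) (l ++ c ++ r).
Proof.
  assert (E : forall l0 X r0 : list L, l ++ (l0 ++ X ++ r0) ++ r = (l ++ l0) ++ X ++ (r0 ++ r))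
    by (intros; rewrite <- !app_assoc; auto).
  intros h. destruct h as [l0 r0 x y e|l0 r0 x y e|l0 r0 m|l0 r0 m]; rewrite ?E.
  4:{ replace (l ++ (l0 ++ r0) ++ r) with ((l ++ l0) ++ r0 ++ r) by (rewrite <- !app_assoc; auto). apply fstep_idH. }
  3:{ replace (l ++ (l0 ++ r0) ++ r) with ((l ++ l0) ++ r0 ++ r) by (rewrite <- !app_assoc; auto). apply fstep_idV. }
  - apply fstep_VV; auto.
  - apply fstep_HH; auto.
Qed.

Lemma free_eq_app p m n q (l a c r : list L) : free_eq m n a c -> wpath p l m -> wpath n r q ->
  free_eq p q (l ++ a ++ r) (l ++ c ++ r).
Proof.
  intros h hl hr. induction h as [x y [h1 [h2 h3]]| | |].
  - apply rst_step. split; [|split]; eauto using wpath_app, fstep_app.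
  - apply rst_refl.
  - apply rst_sym; auto.
  - eapply rst_trans; eauto.
Qed.

Definition redp p q (a c : list L) := wpath p a q -> free_eq p q a c /\ wpath p c q.

Lemma redp_refl p q a : redp p q a a.
Proof. intros h; split; auto. apply rst_refl. Qed.

Lemma redp_eq p q (a b c : list L) : a = b -> redp p q b c -> redp p q a c.
Proof. intros ->; auto. Qed.

Lemma redp_VV p q l r (x y : V) c : redp p q (l ++ LV (gcomp V x y) :: r) c -> redp p q (l ++ LV x :: LV y :: r) c.
Proof.
  intros hr hw. destruct (wpath_app_inv _ _ hw) as [m [h1 h2]].
  apply wpV_inv in h2 as [em h2]. apply wpV_inv in h2 as [exy h2].
  assert (hw2 : wpath p (l ++ LV (gcomp V x y) :: r) q).
  { apply wpath_app with m; auto. apply wpV. rewrite (gcomp_src (g_ax V)); auto.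
    rewrite (gcomp_tgt (g_ax V)); auto. }
  destruct (hr hw2) as [f hc]. split; auto.
  eapply rst_trans; [|exact f]. apply rst_step. split; [|split]; auto.
  apply (fstep_VV (H:=H)); auto.
Qed.

Lemma redp_HH p q l r (x y : H) c : redp p q (l ++ LH (gcomp H x y) :: r) c -> redp p q (l ++ LH x :: LH y :: r) c.
Proof.
  intros hr hw. destruct (wpath_app_inv _ _ hw) as [m [h1 h2]].
  apply wpH_inv in h2 as [em h2]. apply wpH_inv in h2 as [exy h2].
  assert (hw2 : wpath p (l ++ LH (gcomp H x y) :: r) q).
  { apply wpath_app with m; auto. apply wpH. rewrite (gcomp_src (g_ax H)); auto.
    rewrite (gcomp_tgt (g_ax H)); auto. }
  destruct (hr hw2) as [f hc]. split; auto.
  eapply rst_trans; [|exact f]. apply rst_step. split; [|split]; auto.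
  apply (fstep_HH (V:=V)); auto.
Qed.

Lemma redp_idV p q l r m0 c : redp p q (l ++ r) c -> redp p q (l ++ LV (gid V m0) :: r) c.
Proof.
  intros hr hw. destruct (wpath_app_inv _ _ hw) as [m [h1 h2]].
  apply wpV_inv in h2 as [em h2]. rewrite (gid_tgt (g_ax V)) in h2. rewrite (gid_src (g_ax V)) in em. subst.
  destruct (hr (wpath_app h1 h2)) as [f hc]. split; auto.
  eapply rst_trans; [|exact f]. apply rst_step. split; [|split]; eauto using wpath_app.
  apply (fstep_idV (H:=H)).
Qed.

Lemma redp_idH p q l r m0 c : redp p q (l ++ r) c -> redp p q (l ++ LH (gid H m0) :: r) c.
Proof.
  intros hr hw. destruct (wpath_app_inv _ _ hw) as [m [h1 h2]].
  apply wpH_inv in h2 as [em h2]. rewrite (gid_tgt (g_ax H)) in h2. rewrite (gid_src (g_ax H)) in em. subst.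
  destruct (hr (wpath_app h1 h2)) as [f hc]. split; auto.
  eapply rst_trans; [|exact f]. apply rst_step. split; [|split]; eauto using wpath_app.
  apply (fstep_idH (V:=V)).
Qed.

End Paths.
Section Box.
Context (P : Type) (V H : groupoid P) (D : double_groupoid V H).
Notation L := (letter V H).
Notation GV := (g_ax V). Notation GH := (g_ax H).
Notation HG := (hgroupoid D). Notation VG := (vgroupoid D).

Lemma inJ_path p (a : list L) : inJ D p a -> wpath p a p.
Proof. intros [h _]; auto. Qed.

Lemma inJ_nil p : inJ D p [].
Proof. split. constructor. exists []. split; auto. apply rst_refl. Qed.

Lemma inJ_fwd p (a c : list L) : inJ D p a -> redp p p a c -> inJ D p c.
Proof.
  intros [hw [ws [hf he]]] hr. destruct (hr hw) as [f hc]. split; auto.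
  exists ws; split; auto. eapply rst_trans; [apply rst_sym; exact f| exact he].
Qed.

Lemma inJ_bwd p (a c : list L) : inJ D p c -> redp p p a c -> wpath p a p -> inJ D p a.
Proof.
  intros [hw [ws [hf he]]] hr ha. destruct (hr ha) as [f hc]. split; auto.
  exists ws; split; auto. eapply rst_trans; [exact f| exact he].
Qed.

Lemma inJ_app p (a b : list L) : inJ D p a -> inJ D p b -> inJ D p (a ++ b).
Proof.
  intros [ha [ws1 [hf1 he1]]] [hb [ws2 [hf2 he2]]]. split. eapply wpath_app; eauto.
  exists (ws1 ++ ws2). split. apply Forall_app; auto.
  rewrite concat_app. eapply rst_trans.
  - pose proof (free_eq_app (l := []) he1 (wpath_nil V H p) hb) as X. simpl in X. exact X.
  - assert (hc : wpath p (concat ws1) p).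
    { destruct (free_eq_paths he1) as [<-|[]]; auto. }
    pose proof (free_eq_app (r := []) he2 hc (wpath_nil V H p)) as X. rewrite !app_nil_r in X. exact X.
Qed.

Lemma inJ_winv p (a : list L) : inJ D p a -> inJ D p (winv a).
Proof.
  intros [ha [ws [hf he]]]. split. apply wpath_winv; auto.
  exists (rev (map (fun w => winv w) ws)). split.
  - apply Forall_forall. intros x hx. apply in_rev in hx. apply in_map_iff in hx as [y [<- hy]].
    rewrite Forall_forall in hf. destruct (hf y hy) as [A [->| ->]]; exists A; auto.
    left. apply winv_winv.
  - rewrite <- winv_concat. apply free_eq_winv; auto.
Qed.

Lemma boxword_path A : wpath (gsrc V (bleft D A)) (boxword D A) (gsrc V (bleft D A)).
Proof.
  unfold boxword. apply wpH. apply corner_tl. rewrite corner_tr.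
  apply wpV; auto. apply wpH. rewrite (ginv_src GH). rewrite corner_br; auto.
  rewrite (ginv_tgt GH), corner_bl. apply wpV. apply (ginv_src GV).
  rewrite (ginv_tgt GV). constructor.
Qed.

Lemma inJ_box A : inJ D (gsrc V (bleft D A)) (boxword D A).
Proof.
  split. apply boxword_path. exists [boxword D A]. split.
  - constructor; eauto.
  - simpl. rewrite ?app_nil_r. apply rst_refl.
Qed.

Lemma hinv_top A : btop D (hinv D A) = ginv H (btop D A).
Proof.
  apply (inv_unique GH).
  - rewrite corner_tr, corner_tl, (ginv_src HG). auto.
  - rewrite <- hcomp_top. rewrite (ginv_right HG), hid_top, corner_tl. auto.
    rewrite (ginv_src HG); auto.
Qed.

Lemma vinv_left A : bleft D (vinv D A) = ginv V (bleft D A).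
Proof.
  apply (inv_unique GV).
  - rewrite <- corner_bl, <- corner_tl, (ginv_src VG). auto.
  - rewrite <- vcomp_left. rewrite (ginv_right VG), vid_left, corner_tl. auto.
    rewrite (ginv_src VG); auto.
Qed.

Hypothesis Fill : filling D.

Lemma fill_tr (x : H) (f : V) : gtgt H x = gsrc V f -> exists A, btop D A = x /\ bright D A = f.
Proof.
  intros e. assert (e' : gsrc H (ginv H x) = gsrc V f) by (rewrite (ginv_src GH); auto).
  destruct (Fill _ _ e') as [C [h1 h2]].
  exists (hinv D C). rewrite hinv_top, h1, (inv_inv GH), (ginv_tgt HG). auto.
Qed.

Lemma fill_bl (y : H) (f : V) : gsrc H y = gtgt V f -> exists A, bbot D A = y /\ bleft D A = f.
Proof.
  intros e. assert (e' : gsrc H y = gsrc V (ginv V f)) by (rewrite (ginv_src GV); auto).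
  destruct (Fill _ _ e') as [C [h1 h2]].
  exists (vinv D C). rewrite vinv_left, h2, (inv_inv GV), (ginv_tgt VG). auto.
Qed.

End Box.
Section Conj.
Context (P : Type) (V H : groupoid P) (D : double_groupoid V H).
Notation L := (letter V H).
Notation GV := (g_ax V). Notation GH := (g_ax H).
Notation HG := (hgroupoid D). Notation VG := (vgroupoid D).
Hypothesis Fill : filling D.

Lemma conj_gen_V (u : V) A : gtgt V u = gsrc V (bleft D A) ->
  inJ D (gsrc V u) ([LV u] ++ boxword D A ++ [LV (ginv V u)]).
Proof.
  intros e.
  assert (e0 : gsrc H (btop D A) = gtgt V u) by (rewrite corner_tl; auto).
  destruct (fill_bl Fill _ _ e0) as [B [hb hl]].
  assert (elA : gtgt V (bleft D B) = gsrc V (bleft D A)) by (rewrite hl; auto).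
  assert (JBA := inJ_box D (vcomp D B A)).
  assert (JB := inJ_winv (inJ_box D B)).
  rewrite (vcomp_left _ _ _ hb), (gcomp_src GV _ _ elA) in JBA. rewrite hl in JBA, JB.
  assert (J := inJ_app JB JBA).
  unfold boxword, winv in J; simpl in J.
  rewrite (vcomp_left _ _ _ hb), (vcomp_right _ _ _ hb), (gcomp_src VG _ _ hb), (gcomp_tgt VG _ _ hb) in J.
  rewrite !(inv_inv GV), !(inv_inv GH), hl, hb in J.
  assert (er : gtgt V (bright D B) = gsrc V (bright D A)) by (rewrite <- corner_br, hb, corner_tr; auto).
  assert (Jc : inJ D (gsrc V u) [LV u; LH (btop D A); LV (bright D A); LH (ginv H (bbot D A));
                                  LV (ginv V (gcomp V u (bleft D A)))]).
  { eapply inJ_fwd. exact J.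
    apply (redp_HH [LV u; LH (btop D A); LV (ginv V (bright D B))]).
    rewrite (ginv_left GH). apply (redp_idH [LV u; LH (btop D A); LV (ginv V (bright D B))]).
    apply (redp_VV [LV u; LH (btop D A)]). rewrite (comp_inv_l GV _ _ er). apply redp_refl. }
  eapply inJ_bwd. exact Jc.
  - simpl. apply (redp_VV [LV u; LH (btop D A); LV (bright D A); LH (ginv H (bbot D A))]).
    rewrite <- (inv_comp GV _ _ e). apply redp_refl.
  - eapply wpath_app. apply wpV; [reflexivity|]. rewrite e. constructor.
    eapply wpath_app. apply (boxword_path D). apply wpV. rewrite (ginv_src GV). auto.
    rewrite (ginv_tgt GV). constructor.
Qed.

Lemma conj_gen_H (kk : H) A : gtgt H kk = gsrc V (bleft D A) ->
  inJ D (gsrc H kk) ([LH kk] ++ boxword D A ++ [LH (ginv H kk)]).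
Proof.
  intros e.
  destruct (fill_tr Fill _ _ e) as [B [ht hr]].
  assert (eb : gsrc V (bleft D B) = gsrc H kk) by (rewrite <- corner_tl, ht; auto).
  assert (JBA := inJ_box D (hcomp D B A)).
  assert (JB := inJ_winv (inJ_box D B)).
  rewrite (gcomp_src HG _ _ hr), eb in JBA. rewrite eb in JB.
  assert (J := inJ_app JBA JB).
  unfold boxword, winv in J; simpl in J.
  rewrite (hcomp_top _ _ _ hr), (hcomp_bot _ _ _ hr), (gcomp_src HG _ _ hr), (gcomp_tgt HG _ _ hr) in J.
  rewrite !(inv_inv GV), !(inv_inv GH), hr, ht in J.
  assert (ey : gtgt H (bbot D B) = gsrc H (bbot D A)) by (rewrite corner_br, hr, corner_bl; auto).
  assert (Jc : inJ D (gsrc H kk) [LH (gcomp H kk (btop D A)); LV (bright D A); LH (ginv H (bbot D A));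
                                  LV (ginv V (bleft D A)); LH (ginv H kk)]).
  { eapply inJ_fwd. exact J.
    apply (redp_VV [LH (gcomp H kk (btop D A)); LV (bright D A); LH (ginv H (gcomp H (bbot D B) (bbot D A)))]).
    rewrite (ginv_left GV).
    apply (redp_idV [LH (gcomp H kk (btop D A)); LV (bright D A); LH (ginv H (gcomp H (bbot D B) (bbot D A)))]).
    apply (redp_HH [LH (gcomp H kk (btop D A)); LV (bright D A)]). rewrite (comp_inv_comp GH _ _ ey).
    apply redp_refl. }
  eapply inJ_bwd. exact Jc.
  - simpl. apply (redp_HH []). apply redp_refl.
  - eapply wpath_app. apply wpH; [reflexivity|]. rewrite e. constructor.
    eapply wpath_app. apply (boxword_path D). apply wpH. rewrite (ginv_src GH). auto.
    rewrite (ginv_tgt GH). constructor.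
Qed.

End Conj.
Section Conj2.
Context (P : Type) (V H : groupoid P) (D : double_groupoid V H).
Notation L := (letter V H).
Notation GV := (g_ax V). Notation GH := (g_ax H).
Hypothesis Fill : filling D.

Definition gen (g : list L) := exists A, g = boxword D A \/ g = winv (boxword D A).

Lemma gen_loop g : gen g -> exists b, wpath b g b /\ g <> [].
Proof.
  intros [A [->| ->]]; exists (gsrc V (bleft D A)); split.
  - apply boxword_path.
  - unfold boxword; congruence.
  - apply wpath_winv, boxword_path.
  - unfold boxword, winv; simpl; congruence.
Qed.

Lemma winv1 (a : L) : winv [a] = [letter_inv a].
Proof. reflexivity. Qed.

Lemma letter_path_inv (a : L) p m : wpath p [a] m -> wpath m [letter_inv a] p.
Proof. intros h. rewrite <- winv1. apply wpath_winv; auto. Qed.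

Lemma conj_bw (a : L) p m A : wpath p [a] m -> wpath m (boxword D A) m ->
  inJ D p ([a] ++ boxword D A ++ [letter_inv a]).
Proof.
  intros ha hg.
  assert (em : m = gsrc V (bleft D A)).
  { eapply wpath_src_uniq; [| exact hg | apply boxword_path]. unfold boxword; congruence. }
  subst m. destruct a as [u|k].
  - apply wpV_inv in ha as [-> h2]. apply wpnil_inv in h2. apply conj_gen_V; auto.
  - apply wpH_inv in ha as [-> h2]. apply wpnil_inv in h2. apply conj_gen_H; auto.
Qed.

Lemma conj_gen (a : L) p m g : gen g -> wpath p [a] m -> wpath m g m ->
  inJ D p ([a] ++ g ++ [letter_inv a]).
Proof.
  intros [A [->| ->]] ha hg.
  - apply conj_bw with m; auto.
  - apply wpath_winv in hg. rewrite winv_winv in hg.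
    pose proof (inJ_winv (conj_bw ha hg)) as J.
    rewrite !winv_app, !winv1, letter_inv_inv, <- app_assoc in J. exact J.
Qed.

Lemma conj_concat (a : L) p m ws : Forall gen ws -> wpath p [a] m -> wpath m (concat ws) m ->
  inJ D p ([a] ++ concat ws ++ [letter_inv a]).
Proof.
  intros hf ha. induction hf as [|g ws hg hf IH]; intros hw; simpl.
  - eapply inJ_bwd. apply inJ_nil.
    + destruct a as [u|k]; simpl.
      * apply (redp_VV [] []). rewrite (ginv_right GV). apply (redp_idV [] []). apply redp_refl.
      * apply (redp_HH [] []). rewrite (ginv_right GH). apply (redp_idH [] []). apply redp_refl.
    + apply (wpath_app ha (letter_path_inv ha)).
  - destruct (wpath_app_inv _ _ hw) as [m1 [h1 h2]].
    destruct (gen_loop hg) as [b [hb ne]].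
    assert (e1 : m = b) by (eapply wpath_src_uniq; eauto). subst b.
    assert (e2 : m1 = m) by (eapply wpath_tgt_uniq; eauto). subst m1.
    pose proof (inJ_app (conj_gen hg ha hb) (IH h2)) as J.
    eapply inJ_fwd. exact J.
    apply redp_eq with ((a :: g) ++ letter_inv a :: a :: (concat ws ++ [letter_inv a])).
    { simpl. rewrite <- !app_assoc. reflexivity. }
    destruct a as [u|k]; simpl.
    + apply (redp_VV (LV u :: g)). rewrite (ginv_left GV). apply (redp_idV (LV u :: g)).
      simpl. rewrite <- !app_assoc. apply redp_refl.
    + apply (redp_HH (LH k :: g)). rewrite (ginv_left GH). apply (redp_idH (LH k :: g)).
      simpl. rewrite <- !app_assoc. apply redp_refl.
Qed.

Lemma conj_letter (a : L) p m x : wpath p [a] m -> inJ D m x -> inJ D p ([a] ++ x ++ [letter_inv a]).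
Proof.
  intros ha [hx [ws [hf he]]].
  assert (hc : wpath m (concat ws) m) by (destruct (free_eq_paths he) as [<-|[]]; auto).
  pose proof (conj_concat hf ha hc) as J.
  destruct J as [hw [ws' [hf' he']]]. split.
  - eapply wpath_app; eauto. eapply wpath_app; eauto using letter_path_inv.
  - exists ws'. split; auto. eapply rst_trans; [|exact he'].
    apply free_eq_app with m m; auto using letter_path_inv.
Qed.

End Conj2.
Section Surj.
Context (P : Type) (V H : groupoid P) (D : double_groupoid V H).
Notation L := (letter V H).
Notation GV := (g_ax V). Notation GH := (g_ax H).
Hypothesis Fill : filling D.

Lemma winv_bw A : winv (boxword D A) =
  [LV (ginv V (ginv V (bleft D A))); LH (ginv H (ginv H (bbot D A))); LV (ginv V (bright D A)); LH (ginv H (btop D A))].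
Proof. reflexivity. Qed.

Lemma surj p (w : list L) q : wpath p w q -> exists (v : V) (h : H),
  gsrc V v = p /\ gtgt V v = gsrc H h /\ gtgt H h = q /\ inJ D p ([LV v; LH h] ++ winv w).
Proof.
  intros hw. induction hw as [p|v w q hw IH|k w q hw IH].
  - exists (gid V p), (gid H p). rewrite (gid_src GV), (gid_tgt GV), (gid_src GH), (gid_tgt GH).
    split; [|split; [|split]]; auto.
    eapply inJ_bwd. apply inJ_nil.
    + simpl. apply (redp_idV []). apply (redp_idH [] []). apply redp_refl.
    + apply wpV. apply (gid_src GV). rewrite (gid_tgt GV). apply wpH. apply (gid_src GH).
      rewrite (gid_tgt GH). constructor.
  - destruct IH as [v0 [h0 [e1 [e2 [e3 J]]]]].
    assert (ha : wpath (gsrc V v) [@LV _ V H v] (gtgt V v)) by (apply wpV; [reflexivity| apply wpath_nil]).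
    pose proof (conj_letter Fill ha J) as J1.
    exists (gcomp V v v0), h0. rewrite (gcomp_src GV), (gcomp_tgt GV); auto.
    split; [|split; [|split]]; auto.
    eapply inJ_fwd. exact J1. simpl. apply (redp_VV []). rewrite winv_cons. simpl. apply redp_refl.
  - destruct IH as [v0 [h0 [e1 [e2 [e3 J]]]]].
    assert (ha : wpath (gsrc H k) [@LH _ V H k] (gtgt H k)) by (apply wpH; [reflexivity| apply wpath_nil]).
    pose proof (conj_letter Fill ha J) as J1.
    assert (e0 : gtgt H k = gsrc V v0) by auto.
    destruct (fill_tr Fill _ _ e0) as [A [ht hr]].
    pose proof (inJ_winv (inJ_box D A)) as JA.
    rewrite <- corner_tl, ht in JA.
    pose proof (inJ_app JA J1) as J2. rewrite winv_bw, ht, hr, !(inv_inv GV), !(inv_inv GH) in J2.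
    assert (ey : gtgt H (bbot D A) = gsrc H h0) by (rewrite corner_br, hr; auto).
    exists (bleft D A), (gcomp H (bbot D A) h0).
    rewrite (gcomp_src GH _ _ ey), (gcomp_tgt GH _ _ ey), <- corner_tl, <- corner_bl, ht.
    split; [|split; [|split]]; auto.
    eapply inJ_fwd. exact J2.
    apply redp_eq with ([LV (bleft D A); LH (bbot D A); LV (ginv V v0); LH (ginv H k); LH k; LV v0; LH h0]
       ++ (winv w ++ [LH (ginv H k)])).
    { simpl. rewrite <- ?app_assoc. reflexivity. }
    apply (redp_HH [LV (bleft D A); LH (bbot D A); LV (ginv V v0)]). rewrite (ginv_left GH).
    apply (redp_idH [LV (bleft D A); LH (bbot D A); LV (ginv V v0)]).
    apply (redp_VV [LV (bleft D A); LH (bbot D A)]). rewrite (ginv_left GV).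
    apply (redp_idV [LV (bleft D A); LH (bbot D A)]).
    apply (redp_HH [LV (bleft D A)]).
    rewrite winv_cons. simpl. apply redp_refl.
Qed.
End Surj.

Theorem proposition3p1 (P : Type) (V H : groupoid P) (D : double_groupoid V H) :
  slim D -> filling D ->
  Equivalence (simB D) /\
  (forall x y : VH V H, simB D x y ->
     D_eq D (phi_src x) (phi_tgt x) (phi_word x) (phi_word y)) /\
  (forall x y : VH V H,
     phi_src x = phi_src y -> phi_tgt x = phi_tgt y ->
     D_eq D (phi_src x) (phi_tgt x) (phi_word x) (phi_word y) -> simB D x y) /\
  (forall (p q : P) (w : list (letter V H)), wpath p w q ->
     exists x : VH V H, phi_src x = p /\ phi_tgt x = q /\
       D_eq D p q (phi_word x) w).
Proof.
  intros _ Fill.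
  split; [|split; [|split]].
  - split.
    + intros [[v h] e]; simpl in *. split; auto. split; auto.
      eapply inJ_bwd. apply inJ_nil.
      * apply (redp_HH [LV v]). rewrite (ginv_right (g_ax H)), <- e.
        apply (redp_idH [LV v]). apply (redp_VV []). rewrite (ginv_right (g_ax V)).
        apply (redp_idV [] []). apply redp_refl.
      * apply wpV; auto. rewrite e. apply wpH; auto. apply wpH. apply (ginv_src (g_ax H)).
        rewrite (ginv_tgt (g_ax H)), <- e. apply wpV. apply (ginv_src (g_ax V)).
        rewrite (ginv_tgt (g_ax V)). constructor.
    + intros [[v1 h1] e1] [[v2 h2] e2]; simpl. intros [t1 [t2 J]].
      split; auto. split; auto. apply inJ_winv in J. rewrite t2 in J.
      unfold winv in J; simpl in J. rewrite !(inv_inv (g_ax V)), !(inv_inv (g_ax H)) in J. exact J.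
    + intros [[v1 h1] e1] [[v2 h2] e2] [[v3 h3] e3]; simpl. intros [t1 [t2 J1]] [t3 [t4 J2]].
      split; [congruence|]. split; [congruence|]. rewrite <- t2 in J2.
      pose proof (inJ_app J1 J2) as J. eapply inJ_fwd. exact J. simpl.
      apply (redp_VV [LV v1; LH h1; LH (ginv H h2)]). rewrite (ginv_left (g_ax V)).
      apply (redp_idV [LV v1; LH h1; LH (ginv H h2)]).
      apply (redp_HH [LV v1; LH h1]). rewrite (ginv_left (g_ax H)).
      apply (redp_idH [LV v1; LH h1]). apply redp_refl.
  - intros [[v1 h1] e1] [[v2 h2] e2]; unfold D_eq, phi_src, phi_tgt, phi_word; simpl.
    simpl in e1, e2. intros [t1 [t2 J]]. split; [|split].
    + apply wpV; auto. rewrite e1. apply wpH; auto. apply wpath_nil.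
    + apply wpV; auto. rewrite e2. apply wpH; auto. rewrite t1. apply wpath_nil.
    + exact J.
  - intros [[v1 h1] e1] [[v2 h2] e2]; unfold D_eq, phi_src, phi_tgt, phi_word; simpl.
    intros t2 t1 [_ [_ J]]. split; auto.
  - intros p q w hw. destruct (surj Fill hw) as [v [h [e1 [e2 [e3 J]]]]].
    exists (exist _ (v, h) e2). unfold D_eq, phi_src, phi_tgt, phi_word; simpl.
    split; auto. split; auto. split; [|split]; auto.
    apply wpV; auto. rewrite e2. apply wpH; auto. rewrite e3. apply wpath_nil.
Qed.
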